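(* If a policy in $\Pi$ satisfies $$\sum_{l=1}^m f_{l,\eta}\le\frac{\sum_{l=1}^m\mu_{\eta(l)}}{\sum_{l=1}^n\mu_{l}}\qquad\text{for all }m\in[n],\ \eta\in\mathcal S_n,$$ then it is throughput optimal, i.e. the Markov chain $\{\mathbf X(t)\}_{t\ge0}$ is positive recurrent for every arrival process (as in the model) with $n\lambda<\sum_{l=1}^n\mu_l$.
   Context: Model. Fix $n\ge1$, $[n]=\{1,\dots,n\}$, $\mathcal S_n$ the set of permutations of $[n]$, $e_1,\dots,e_n$ the standard basis of $\mathbb R^n$. Time is discrete, $t=0,1,2,\dots$. There are $n$ single-server FIFO queues with infinite buffers; $\mathbf Q(t)\in\mathbb Z_{\ge0}^n$ is the queue-length vector at the start of slot $t$. Arrivals $A(t)\in\mathbb Z_{\ge0}$ are i.i.d. over $t$ with $E[A(1)]=n\lambda$, $\mathrm{Var}(A(1))=n\sigma_\lambda^2$, $A(1)\le nA_{\max}$ a.s. Potential services $\mathbf S(t)\in\mathbb Z_{\ge0}^n$ are i.i.d. over $t$, independent of arrivals, with $E[S_l(1)]=\mu_l>0$, $\mathrm{Var}(S_l(1))=\sigma_l^2$, $S_l(1)\le S_{\max}$ a.s., and $\mu_1\le\dots\le\mu_n$. All $A(t)$ arrivals of slot $t$ go to one queue, encoded by $\mathbf Z(t)\in\{e_1,\dots,e_n\}$, and $\mathbf Q(t+1)=[\mathbf Q(t)+A(t)\mathbf Z(t)-\mathbf S(t)]^+=\mathbf Q(t)+A(t)\mathbf Z(t)-\mathbf S(t)+\mathbf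 U(t)$, where $\mathbf U(t)\ge0$ is the unused service ($0\le U_l(t)\le S_l(t)$, $Q_l(t+1)U_l(t)=0$). Policy class $\Pi$. A policy is given by an integer $T\ge1$, a vector $\boldsymbol\gamma\in(0,\infty)^n$, a sorting map $L$ and a decision map $Y$. Let $\{V_k\},\{W_k\}$ be i.i.d. Unif$[0,1]$ sequences, independent of each other and of arrivals and services. At each sampling time $kT$ the dispatcher forms a permutation $\eta_k=L\big((Q_l(kT)/\gamma_l)_{l=1}^n,V_k\big)\in\mathcal S_n$ satisfying $Q_{\eta_k(1)}(kT)/\gamma_{\eta_k(1)}\ge\dots\ge Q_{\eta_k(n)}(kT)/\gamma_{\eta_k(n)}$ ($\eta_k(l)$ is the index of the $l$-th longest scaled queue), then draws $\phi(k)=Y(\eta_k,\boldsymbol\mu,W_k)=(\phi_1(k),\dots,\phi_T(k))\in\{e_1,\dots,e_n\}^T$, and sets $\mathbf Z(kT+j)=\phi_{j+1}(k)$ for $j=0,\dots,T-1$. The process $\mathbf X(t)=(\mathbf Q(t),\phi(\lfloor t/T\rfloor),t-T\lfloor t/T\rfloor)$ is a discrete-time Markov chain. Dispatching statistics. For $\eta\in\mathcal S_n$, $l\in[n]$, let $N_\eta(l)=\sum_{j=1}^T(\phi_j)_{\eta(l)}$ where $\phi=Y(\eta,\boldsymbol\mu,W)$, $W\sim$ Unif$[0,1]$. Define $f_{l,\eta}=E[N_\eta(l)/T]$; thus $f_{l,\eta}\ge0$ and $\sum_l f_{l,\eta}=1$. *)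

(* Defs.v *)
From HB Require Import structures.
From mathcomp Require Import all_boot all_order all_algebra all_fingroup.
From mathcomp Require Import reals.
Set Implicit Arguments. Unset Strict Implicit. Unset Printing Implicit Defensive.
Import Order.TTheory GRing.Theory Num.Theory.
Local Open Scope ring_scope.

Section Model.
Variable R : realType.

Definition is_distr (X : finType) (p : X -> R) : Prop :=
  (forall x, 0 <= p x) /\ \sum_(x : X) p x = 1.

Variables (n T Smax : nat).

(* service vectors take values in {0..Smax}^n *)
Definition svec := {ffun 'I_n -> 'I_Smax.+1}.

Definition mu (pS : svec -> R) (l : 'I_n) : R :=
  \sum_(s : svec) pS s * (val (s l))%:R.

(* mean number of arrivals per slot E[A(1)] = n * lambda *)
Definition arr_mean (Amax : nat) (pA : 'I_Amax.+1 -> R) : R :=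
  \sum_(a : 'I_Amax.+1) pA a * (val a)%:R.

Definition sorts (v : 'I_n -> R) (eta : 'S_n) : Prop :=
  forall i j : 'I_n, (i <= j)%N -> v (eta j) <= v (eta i).

(* law of L(v, V), V ~ Unif[0,1]: a distribution on S_n supported on
   permutations sorting v *)
Definition valid_sorting (pL : ('I_n -> R) -> 'S_n -> R) : Prop :=
  forall v, is_distr (pL v) /\ (forall eta, 0 < pL v eta -> sorts v eta).

(* dispatching decisions phi in {e_1..e_n}^T, encoded as 'I_T -> 'I_n *)
Definition dvec := {ffun 'I_T -> 'I_n}.

(* f_{l,eta} = E[N_eta(l)/T], phi ~ law of Y(eta, mu, W) *)
Definition fstat (pY : 'S_n -> dvec -> R) (l : 'I_n) (eta : 'S_n) : R :=
  \sum_(phi : dvec) pY eta phi * (#|[pred j | phi j == eta l]|%:R / T%:R).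

(* state of the chain X(t) = (Q(t), phi(floor(t/T)), t mod T) *)
Definition state := ({ffun 'I_n -> nat} * dvec * 'I_T)%type.

Definition ord0_of (r : 'I_T) : 'I_T :=
  Ordinal (leq_ltn_trans (leq0n r) (ltn_ord r)).

(* Q(t+1) = [Q(t) + A(t) e_z - S(t)]^+ *)
Definition qupd (q : {ffun 'I_n -> nat}) (z : 'I_n) (a : nat) (s : svec)
  : {ffun 'I_n -> nat} :=
  [ffun l => (q l + (if l == z then a else 0%N)) - val (s l)]%N.

Definition scaled (gamma : 'I_n -> R) (q : {ffun 'I_n -> nat}) : 'I_n -> R :=
  fun l => (q l)%:R / gamma l.

Variables (Amax : nat) (pA : 'I_Amax.+1 -> R) (pS : svec -> R)
  (gamma : 'I_n -> R) (pL : ('I_n -> R) -> 'S_n -> R) (pY : 'S_n -> dvec -> R).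

(* one-step transition operator: (Pstep g)(x) = E[g(X(t+1)) | X(t) = x] *)
Definition Pstep (g : state -> R) (x : state) : R :=
  let: (q, phi, r) := x in
  \sum_(a : 'I_Amax.+1) \sum_(s : svec) pA a * pS s *
    (let q' := qupd q (phi r) (val a) s in
     match (insub r.+1 : option 'I_T) with
     | Some r' => g (q', phi, r')
     | None => \sum_(eta : 'S_n) \sum_(phi' : dvec)
                 pL (scaled gamma q') eta * pY eta phi' * g (q', phi', ord0_of r)
     end).

(* no_hit C k x = P_x(X(1) \notin C, ..., X(k) \notin C) = P_x(tau_C^+ > k) *)
Fixpoint no_hit (C : seq state) (k : nat) (x : state) : R :=
  match k with
  | 0%N => 1
  | k'.+1 => Pstep (fun y => if y \in C then 0 else no_hit C k' y) x
  end.

(* positive recurrence (Foster sense): there is a finite set C of states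
   such that from every initial state x, E_x[tau_C^+] = sum_k P_x(tau_C^+ > k)
   is finite, where tau_C^+ = inf {t >= 1 : X(t) \in C}. *)
Definition positive_recurrent : Prop :=
  exists C : seq state, forall x : state, exists M : R,
    forall K : nat, \sum_(k < K) no_hit C k x <= M.

End Model.

(* Main.v *)
Require Import Defs.
From HB Require Import structures.
From mathcomp Require Import all_boot all_order all_algebra all_fingroup.
From mathcomp Require Import reals ring lra zify.
Import Order.TTheory GRing.Theory Num.Theory.
Local Open Scope ring_scope.
Set Implicit Arguments. Unset Strict Implicit. Unset Printing Implicit Defensive.

Section Foster.
Variables (R : realType) (n T Smax Amax : nat) (pA : 'I_Amax.+1 -> R)
  (pS : svec n Smax -> R) (gamma : 'I_n -> R)
  (pL : ('I_n -> R) -> 'S_n -> R) (pY : 'S_n -> dvec n T -> R).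
Hypotheses (hA0 : forall a, 0 <= pA a) (hS0 : forall s, 0 <= pS s)
  (hL0 : forall v eta, 0 <= pL v eta) (hY0 : forall eta phi, 0 <= pY eta phi).

Local Notation P := (Pstep pA pS gamma pL pY).

Lemma Pstep_le g1 g2 x : (forall y, g1 y <= g2 y) -> P g1 x <= P g2 x.
Proof.
move=> h; case: x => [[q phi] r] /=.
apply: ler_sum => a _; apply: ler_sum => s _.
apply: ler_wpM2l; first by apply: mulr_ge0.
case: insub => [r'|]; first exact: h.
apply: ler_sum => eta _; apply: ler_sum => phi' _.
apply: ler_wpM2l; first by apply: mulr_ge0.
exact: h.
Qed.

Lemma Pstep_ext g1 g2 x : (forall y, g1 y = g2 y) -> P g1 x = P g2 x.
Proof.
move=> h; apply/eqP; rewrite eq_le !Pstep_le // => y; rewrite h //.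
Qed.

Lemma Pstep_add g1 g2 x : P (fun y => g1 y + g2 y) x = P g1 x + P g2 x.
Proof.
case: x => [[q phi] r] /=.
rewrite -big_split; apply: eq_bigr => a _; rewrite -big_split; apply: eq_bigr => s _.
simpl; rewrite -mulrDr; congr (_ * _).
case: insub => [r'|] //.
rewrite -big_split; apply: eq_bigr => eta _; rewrite -big_split; apply: eq_bigr => phi' _.
by rewrite mulrDr.
Qed.

Lemma Pstep0 x : P (fun _ => 0) x = 0.
Proof.
case: x => [[q phi] r] /=.
apply: big1 => a _; apply: big1 => s _.
case: insub => [r'|]; first by rewrite mulr0.
rewrite big1 ?mulr0 // => eta _; apply: big1 => phi' _; by rewrite mulr0.
Qed.

Lemma Pstep_sum K (F : nat -> state n T -> R) x :
  P (fun y => \sum_(k < K) F k y) x = \sum_(k < K) P (F k) x.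
Proof.
elim: K => [|K IH].
  rewrite big_ord0 -[RHS](Pstep0 x); apply: Pstep_ext => y; by rewrite big_ord0.
rewrite big_ord_recr /= -IH -Pstep_add; apply: Pstep_ext => y.
by rewrite big_ord_recr.
Qed.

Lemma foster (C : seq (state n T)) (W : state n T -> R) :
  (forall y, 0 <= W y) ->
  (forall x, x \notin C -> P W x <= W x - 1) ->
  forall K x, \sum_(k < K) no_hit pA pS gamma pL pY C k x <= 1 + P W x.
Proof.
move=> hW hdrift; elim => [|K IH] x.
  rewrite big_ord0; apply: addr_ge0 => //.
  rewrite -(Pstep0 x); exact: Pstep_le.
rewrite big_ord_recl /=; apply: lerD => //.
have -> : \sum_(i < K) no_hit pA pS gamma pL pY C (lift ord0 i) x =
  \sum_(i < K) P (fun y => if y \in C then 0 else no_hit pA pS gamma pL pY C i y) x.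
  by apply: eq_bigr => i _; rewrite lift0.
rewrite -(@Pstep_sum K (fun i y => if y \in C then 0 else no_hit pA pS gamma pL pY C i y)); apply: Pstep_le => y.
have -> : \sum_(i < K) (if y \in C then 0 else no_hit pA pS gamma pL pY C i y) =
   if y \in C then 0 else \sum_(i < K) no_hit pA pS gamma pL pY C i y.
  by case: (y \in C) => //; rewrite big1.
case: ifP => hy; first exact: hW.
apply: le_trans (IH y) _.
have := hdrift y (negbT hy); lra.
Qed.

End Foster.
Lemma eqW (R : numDomainType) (x y : R) : x = y -> x <= y.
Proof. by move->. Qed.

Lemma sq_bound (R : realDomainType) (x e s D : nat) : (e <= D)%N -> (s <= D)%N ->
  (((x + e) - s)%N%:R : R) ^+ 2 <=
  x%:R ^+ 2 + D%:R ^+ 2 + 2 * x%:R * e%:R - 2 * x%:R * s%:R.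
Proof.
move=> he hs.
have heR : (e%:R : R) <= D%:R by rewrite ler_nat.
have hsR : (s%:R : R) <= D%:R by rewrite ler_nat.
have e0 : (0 : R) <= e%:R by [].
have s0 : (0 : R) <= s%:R by [].
have x0 : (0 : R) <= x%:R by [].
case: (leqP s (x + e)) => h.
  rewrite natrB // natrD.
  nra.
have -> : ((x + e) - s)%N = 0%N by apply/eqP; rewrite subn_eq0 ltnW.
have hx : (x%:R : R) <= s%:R by rewrite ler_nat; lia.
rewrite expr0n /=; nra.
Qed.

Lemma big_ltS (R : nmodType) n m (p : 'I_n) (F : 'I_n -> R) : val p = m ->
  \sum_(k : 'I_n | (k < m.+1)%N) F k = \sum_(k : 'I_n | (k < m)%N) F k + F p.
Proof.
move=> hp; rewrite (bigD1 p) /=; last by rewrite hp.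
rewrite addrC; congr (_ + _); apply: eq_bigl => k.
rewrite ltnS; have -> : (k != p) = (val k != m) by rewrite -hp.
by case: ltngtP.
Qed.

Lemma abel_aux (R : realDomainType) n (f g : 'I_n -> R) m :
  (m <= n)%N ->
  (forall m', (1 <= m' <= m)%N ->
     \sum_(k : 'I_n | (k < m')%N) f k <= \sum_(k : 'I_n | (k < m')%N) g k) ->
  forall s : 'I_n -> R,
  (forall i j : 'I_n, (i <= j)%N -> (j < m)%N -> s j <= s i) ->
  (forall i : 'I_n, (i < m)%N -> 0 <= s i) ->
  \sum_(k : 'I_n | (k < m)%N) s k * (f k - g k) <= 0.
Proof.
elim: m => [|m IH] hm hfg s hs hs0.
  by rewrite big_pred0.
have hmn : (m < n)%N by [].
pose p := Ordinal hmn.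
have e1 : \sum_(k : 'I_n | (k < m.+1)%N) s k * (f k - g k) =
  \sum_(k : 'I_n | (k < m.+1)%N) (s k - s p) * (f k - g k) +
  s p * \sum_(k : 'I_n | (k < m.+1)%N) (f k - g k).
  rewrite mulr_sumr -big_split /=; apply: eq_bigr => k _; ring.
rewrite e1 (@big_ltS _ _ _ p) // subrr mul0r addr0.
apply: ler_wnDl.
  apply: IH => //.
  - by apply: ltnW.
  - move=> m' /andP[h1 h2]; apply: hfg; rewrite h1 /=; exact: leq_trans h2 _.
  - move=> i j hij hjm; rewrite lerD2r; apply: hs => //; exact: ltnW.
  - move=> i him; rewrite subr_ge0; apply: hs => //=; exact: ltnW.
apply: mulr_ge0_le0; first by apply: hs0.
rewrite sumrB subr_le0; apply: hfg; by rewrite leqnn.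
Qed.

Lemma abel (R : realDomainType) n (s f g : 'I_n -> R) :
  (forall i j : 'I_n, (i <= j)%N -> s j <= s i) ->
  (forall i, 0 <= s i) ->
  (forall m, (1 <= m <= n)%N ->
     \sum_(k : 'I_n | (k < m)%N) f k <= \sum_(k : 'I_n | (k < m)%N) g k) ->
  \sum_k s k * f k <= \sum_k s k * g k.
Proof.
move=> hs hs0 hfg.
have := @abel_aux R n f g n (leqnn n) hfg s (fun i j h _ => hs i j h) (fun i _ => hs0 i).
have e : forall F : 'I_n -> R, \sum_(k : 'I_n | (k < n)%N) F k = \sum_k F k.
  by move=> F; apply: eq_bigl => k; rewrite ltn_ord.
rewrite e => h; rewrite -subr_le0 -sumrB.
by under eq_bigr => k _ do rewrite -mulrBr.
Qed.

Section Lyap.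
Variables (R : realType) (n T Smax Amax : nat) (pA : 'I_Amax.+1 -> R)
  (pS : svec n Smax -> R) (gamma : 'I_n -> R)
  (pL : ('I_n -> R) -> 'S_n -> R) (pY : 'S_n -> dvec n T -> R).
Hypotheses (hA : is_distr pA) (hS : is_distr pS) (hg : forall l, 0 < gamma l)
  (hmu : forall l, 0 < mu pS l).

Lemma E1 c : \sum_a \sum_s pA a * pS s * c = c.
Proof.
rewrite (eq_bigr (fun a => pA a * c)); first by rewrite -mulr_suml hA.2 mul1r.
move=> a _; rewrite -[RHS]mulr1 -hS.2 mulr_sumr; apply: eq_bigr => s _; ring.
Qed.

Lemma Ele (F G : 'I_Amax.+1 -> svec n Smax -> R) :
  (forall a s, F a s <= G a s) ->
  \sum_a \sum_s pA a * pS s * F a s <= \sum_a \sum_s pA a * pS s * G a s.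
Proof.
move=> h; apply: ler_sum => a _; apply: ler_sum => s _.
apply: ler_wpM2l => //; apply: mulr_ge0; [exact: hA.1 | exact: hS.1].
Qed.

Lemma Eaff c (f : 'I_Amax.+1 -> R) (g : svec n Smax -> R) :
  \sum_a \sum_s pA a * pS s * (c + f a + g s) =
  c + \sum_a pA a * f a + \sum_s pS s * g s.
Proof.
have -> : \sum_a \sum_s pA a * pS s * (c + f a + g s) =
  \sum_a \sum_s pA a * pS s * c + \sum_a \sum_s pA a * pS s * f a +
  \sum_a \sum_s pA a * pS s * g s.
  rewrite -!big_split; apply: eq_bigr => a _; rewrite -!big_split.
  by apply: eq_bigr => s _ /=; ring.
rewrite E1; congr (_ + _ + _).
  apply: eq_bigr => a _; rewrite -[RHS]mulr1 -hS.2 mulr_sumr.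
  by apply: eq_bigr => s _; ring.
rewrite exchange_big /=; apply: eq_bigr => s _.
rewrite -[RHS]mul1r -hA.2 mulr_suml; apply: eq_bigr => a _; ring.
Qed.

Definition V (q : {ffun 'I_n -> nat}) : R := \sum_l (q l)%:R ^+ 2 / gamma l.
Definition sc q l := scaled gamma q l.
Definition Lam := arr_mean pA.
Definition term (z : 'I_n) q := sc q z * Lam - \sum_l sc q l * mu pS l.
Definition D := (Amax + Smax)%N.
Definition B0 := \sum_l D%:R ^+ 2 / gamma l.

Lemma V_step q z (a : 'I_Amax.+1) (s : svec n Smax) :
  V (qupd q z a s) <= V q + B0 + 2 * (sc q z * (val a)%:R)
     - 2 * \sum_l sc q l * (val (s l))%:R.
Proof.
rewrite /V /B0.
have e1 : sc q z * (val a)%:R =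
   \sum_l sc q l * (if l == z then val a else 0%N)%:R.
  rewrite (bigD1 z) //= eqxx big1 ?addr0 // => l /negbTE ->; by rewrite mulr0.
rewrite e1.
set F := fun l => (q l)%:R ^+ 2 / gamma l + D%:R ^+ 2 / gamma l +
   2 * (sc q l * (if l == z then val a else 0%N)%:R) - 2 * (sc q l * (val (s l))%:R).
have -> : \sum_l (q l)%:R ^+ 2 / gamma l + \sum_l D%:R ^+ 2 / gamma l +
  2 * \sum_l sc q l * (if l == z then val a else 0%N)%:R -
  2 * \sum_l sc q l * (val (s l))%:R = \sum_l F l.
  by rewrite /F sumrB !big_split /= !mulr_sumr.
apply: ler_sum => l _; rewrite ffunE /sc /scaled.
have hgl := hg l.
have := @sq_bound R (q l) (if l == z then val a else 0%N) (val (s l)) D.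
have ha : (val a <= D)%N.
  have : (val a < Amax.+1)%N := ltn_ord a. rewrite /D; lia.
have hs : (val (s l) <= D)%N.
  have : (val (s l) < Smax.+1)%N := ltn_ord (s l). rewrite /D; lia.
have he : ((if l == z then val a else 0%N) <= D)%N by case: (l == z).
move=> /(_ he hs) H.
set X := (_ ^+ 2) in H *.
have hgi : 0 <= (gamma l)^-1 by rewrite invr_ge0 ltW.
have := ler_wpM2r hgi H.
move=> H2; apply: le_trans H2 _.
rewrite /F le_eqVlt; apply/orP; left; apply/eqP; rewrite /=.
rewrite /sc /scaled; ring.
Qed.


Lemma Eadd (F : 'I_Amax.+1 -> svec n Smax -> R) c :
  \sum_a \sum_s pA a * pS s * (F a s + c) = \sum_a \sum_s pA a * pS s * F a s + c.
Proof.
rewrite -[in RHS](E1 c) -big_split; apply: eq_bigr => a _.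
rewrite -big_split; apply: eq_bigr => s _ /=; ring.
Qed.

Lemma Lam_ge0 : 0 <= Lam.
Proof. apply: sumr_ge0 => a _; apply: mulr_ge0 => //; exact: hA.1. Qed.

Lemma EV_step q z :
  \sum_a \sum_s pA a * pS s * V (qupd q z (val a) s) <= V q + B0 + 2 * term z q.
Proof.
apply: le_trans (Ele (fun a s => V_step q z a s)) _.
have -> : \sum_a \sum_s pA a * pS s * (V q + B0 + 2 * (sc q z * (val a)%:R)
     - 2 * \sum_l sc q l * (val (s l))%:R) =
  \sum_a \sum_s pA a * pS s * ((V q + B0) + (2 * (sc q z * (val a)%:R))
     + (- (2 * \sum_l sc q l * (val (s l))%:R))) by [].
rewrite Eaff; apply: eqW.
rewrite /term /Lam /arr_mean /mu.
have -> : \sum_a pA a * (2 * (sc q z * (val a)%:R)) =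
  2 * sc q z * \sum_a pA a * (val a)%:R.
  by rewrite mulr_sumr; apply: eq_bigr => a _; ring.
have -> : \sum_s pS s * - (2 * \sum_l sc q l * (val (s l))%:R) =
  - (2 * \sum_l sc q l * \sum_s pS s * (val (s l))%:R).
  transitivity (\sum_s \sum_l - (2 * (sc q l * (pS s * (val (s l))%:R)))).
    apply: eq_bigr => s _; rewrite mulr_sumr -sumrN mulr_sumr.
    by apply: eq_bigr => l _; ring.
  rewrite exchange_big /= [in RHS]mulr_sumr -[in RHS]sumrN; apply: eq_bigr => l _.
  rewrite [in RHS]mulr_sumr [in RHS]mulr_sumr -[in RHS]sumrN; apply: eq_bigr => s _; ring.
ring.
Qed.

Definition B1 := Amax%:R * Lam * \sum_l (gamma l)^-1 + Smax%:R * \sum_l (gamma l)^-1 * mu pS l.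

Lemma B1_ge0 : 0 <= B1.
Proof.
apply: addr_ge0; apply: mulr_ge0 => //.
- apply: mulr_ge0 => //; exact: Lam_ge0.
- apply: sumr_ge0 => l _; rewrite invr_ge0 ltW //.
- apply: sumr_ge0 => l _; apply: mulr_ge0; rewrite ?invr_ge0 ltW //.
Qed.

Lemma qupd_le (q : {ffun 'I_n -> nat}) z (a : 'I_Amax.+1) (s : svec n Smax) l : ((qupd q z a s) l <= q l + Amax)%N.
Proof.
rewrite ffunE; have : (val a < Amax.+1)%N := ltn_ord a.
case: (l == z) => /=; lia.
Qed.

Lemma qupd_ge (q : {ffun 'I_n -> nat}) z (a : 'I_Amax.+1) (s : svec n Smax) l : (q l <= (qupd q z a s) l + Smax)%N.
Proof.
rewrite ffunE; have : (val (s l) < Smax.+1)%N := ltn_ord (s l).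
case: (l == z) => /=; lia.
Qed.

Lemma term_shift (q : {ffun 'I_n -> nat}) z (a : 'I_Amax.+1) (s : svec n Smax) z' :
  term z' (qupd q z a s) <= term z' q + B1.
Proof.
rewrite /term /B1 /sc /scaled.
set q' := qupd q z a s.
have h1 : (q' z')%:R / gamma z' * Lam <= (q z')%:R / gamma z' * Lam +
     Amax%:R * Lam * \sum_l (gamma l)^-1.
  have hz : (gamma z')^-1 <= \sum_l (gamma l)^-1.
    rewrite (bigD1 z') //= lerDl; apply: sumr_ge0 => l _; rewrite invr_ge0 ltW //.
  have hq : ((q' z')%:R : R) <= (q z')%:R + Amax%:R by rewrite -natrD ler_nat qupd_le.
  have hgi : 0 <= (gamma z')^-1 by rewrite invr_ge0 ltW.
  have hL := Lam_ge0.
  have hA0 : (0 : R) <= Amax%:R by [].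
  have := ler_wpM2r hgi hq; have := ler_wpM2l hA0 hz.
  move=> H1 H2.
  have := ler_wpM2r hL H2; have := ler_wpM2r hL H1.
  rewrite /=; nra.
have h2 : - \sum_l (q' l)%:R / gamma l * mu pS l <= - \sum_l (q l)%:R / gamma l * mu pS l +
     Smax%:R * \sum_l (gamma l)^-1 * mu pS l.
  rewrite mulr_sumr lerNl opprD opprK -sumrN -big_split /=.
  apply: ler_sum => l _.
  have hq : ((q l)%:R : R) <= (q' l)%:R + Smax%:R by rewrite -natrD ler_nat qupd_ge.
  have hgi : 0 <= (gamma l)^-1 by rewrite invr_ge0 ltW.
  have hm : 0 <= mu pS l by apply: ltW.
  have := ler_wpM2r hgi hq => H; have := ler_wpM2r hm H.
  rewrite mulrDl mulrDl => H'; rewrite mulrA; lra.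
lra.
Qed.


Hypothesis hT : (0 < T)%N.
Definition idx (j : nat) : 'I_T := insubd (Ordinal hT) j.

Fixpoint Hn (k : nat) (phi : dvec n T) (j : nat) (q : {ffun 'I_n -> nat}) : R :=
  if k is k'.+1 then
    \sum_a \sum_s pA a * pS s * Hn k' phi j.+1 (qupd q (phi (idx j)) (val a) s)
  else V q.

Lemma B0_ge0 : 0 <= B0.
Proof. apply: sumr_ge0 => l _; apply: divr_ge0; [apply: exprn_ge0; exact: ler0n | exact: ltW (hg l)]. Qed.

Lemma Hn_bound k : forall phi j q,
  Hn k phi j q <= V q + 2 * \sum_(i < k) term (phi (idx (j + i))) q
     + (k%:R * B0 + 2 * k%:R ^+ 2 * B1).
Proof.
elim: k => [|k IH] phi j q.
  rewrite /= big_ord0 mulr0n expr2 !mulr0 !mul0r !addr0 //.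
rewrite /=.
set c := k%:R * B0 + 2 * k%:R ^+ 2 * B1.
set St := fun q' => \sum_(i < k) term (phi (idx (j.+1 + i))) q'.
apply: le_trans (Ele (fun a s => IH phi j.+1 (qupd q (phi (idx j)) (val a) s))) _.
have h2 : forall (a : 'I_Amax.+1) (s : svec n Smax),
  V (qupd q (phi (idx j)) (val a) s) + 2 * St (qupd q (phi (idx j)) (val a) s) + c <=
  V (qupd q (phi (idx j)) (val a) s) + (2 * (St q + k%:R * B1) + c).
  move=> a s; suff : St (qupd q (phi (idx j)) (val a) s) <= St q + k%:R * B1 by lra.
  rewrite /St; apply: le_trans (ler_sum _ (fun i _ => term_shift q (phi (idx j)) a s _)) _.
  by rewrite big_split /= sumr_const card_ord mulr_natl.
apply: le_trans (Ele h2) _.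
rewrite Eadd.
apply: le_trans (lerD (EV_step q (phi (idx j))) (lexx _)) _.
rewrite big_ord_recl addn0.
have -> : \sum_(i < k) term (phi (idx (j + lift ord0 i))) q = St q.
  by apply: eq_bigr => i _; rewrite /= /bump /= add1n addnS.
rewrite /c.
have hk : (0 : R) <= k%:R by [].
have := B1_ge0; have := B0_ge0 => h0 h1.
have : 0 <= k%:R * B1 by apply: mulr_ge0.
rewrite -natr1 /=.
nra.
Qed.


Lemma idx_ord (i : 'I_T) : idx i = i.
Proof. rewrite /idx; apply: val_inj => /=; rewrite insubdK //; exact: ltn_ord. Qed.
Definition cT := T%:R * B0 + 2 * T%:R ^+ 2 * B1.

Lemma Hn_frame phi q :
  Hn T phi 0 q <= V q + cT + 2 * Lam * \sum_(i : 'I_T) sc q (phi i)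
      - 2 * T%:R * \sum_l sc q l * mu pS l.
Proof.
apply: le_trans (Hn_bound T phi 0 q) _; apply: eqW.
rewrite /term big_split /= sumrN sumr_const card_ord.
have -> : \sum_(i < T) sc q (phi (idx (0 + i))) * Lam = Lam * \sum_(i : 'I_T) sc q (phi i).
  rewrite mulr_sumr; apply: eq_bigr => i _; by rewrite add0n idx_ord mulrC.
rewrite /cT -mulr_natl; ring.
Qed.

Lemma count_eq (eta : 'S_n) (phi : dvec n T) (f : 'I_n -> R) :
  \sum_(i : 'I_T) f (phi i) = \sum_k f (eta k) * (#|[pred j | phi j == eta k]|)%:R.
Proof.
rewrite (partition_big phi xpredT) //=.
rewrite (reindex_inj (@perm_inj _ eta)) /=.
apply: eq_bigr => k _.
rewrite (eq_bigr (fun _ => f (eta k))); last by move=> i /eqP ->.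
by rewrite sumr_const mulr_natr.
Qed.


Lemma fstat_sum (eta : 'S_n) (f : 'I_n -> R) :
  \sum_phi pY eta phi * \sum_(i : 'I_T) f (phi i) =
  T%:R * \sum_k f (eta k) * fstat pY k eta.
Proof.
have hT0 : (T%:R : R) != 0 by rewrite pnatr_eq0 -lt0n hT.
under eq_bigr => phi _ do rewrite (count_eq eta) mulr_sumr.
rewrite exchange_big /= mulr_sumr; apply: eq_bigr => k _.
rewrite /fstat mulr_sumr mulr_sumr; apply: eq_bigr => phi _.
by field.
Qed.

Hypothesis hf : forall (eta : 'S_n) (m : nat), (1 <= m <= n)%N ->
     \sum_(l : 'I_n | (l < m)%N) fstat pY l eta
       <= (\sum_(l : 'I_n | (l < m)%N) mu pS (eta l)) / (\sum_(l : 'I_n) mu pS l).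

Lemma sc_ge0 q l : 0 <= sc q l.
Proof. rewrite /sc /scaled; apply: divr_ge0 => //; exact: ltW (hg l). Qed.

Lemma sorted_bound (eta : 'S_n) q : sorts (sc q) eta ->
  \sum_k sc q (eta k) * fstat pY k eta <=
  (\sum_l sc q l * mu pS l) / \sum_l mu pS l.
Proof.
move=> hso.
apply: le_trans (@abel R n (fun k => sc q (eta k)) (fun k => fstat pY k eta)
   (fun k => mu pS (eta k) / \sum_l mu pS l) _ _ _) _.
- exact: hso.
- move=> i; exact: sc_ge0.
- by move=> m hm; rewrite -mulr_suml; apply: hf.
apply: eqW; rewrite mulr_suml [in RHS](reindex_inj (@perm_inj _ eta)) /=.
by apply: eq_bigr => k _; rewrite mulrA.
Qed.


Hypotheses (hL : valid_sorting pL) (hY : forall eta, is_distr (pY eta)).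

Definition Ssm q := \sum_l sc q l * mu pS l.
Definition Smu := \sum_l mu pS l.

Lemma frame_avg q :
  \sum_eta \sum_phi pL (scaled gamma q) eta * pY eta phi * Hn T phi 0 q <=
  V q + cT - 2 * T%:R * Ssm q + 2 * Lam * T%:R * (Ssm q / Smu).
Proof.
set Z := V q + cT - 2 * T%:R * Ssm q + 2 * Lam * T%:R * (Ssm q / Smu).
set a := V q + cT - 2 * T%:R * Ssm q.
apply: (@le_trans _ _ (\sum_eta pL (scaled gamma q) eta * Z)); last first.
  by apply: eqW; rewrite -mulr_suml (hL _).1.2 mul1r.
apply: ler_sum => eta _.
have -> : \sum_phi pL (scaled gamma q) eta * pY eta phi * Hn T phi 0 q =
   pL (scaled gamma q) eta * \sum_phi pY eta phi * Hn T phi 0 q.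
  by rewrite mulr_sumr; apply: eq_bigr => phi _; rewrite mulrA.
have := (hL (scaled gamma q)).1.1 eta; rewrite le_eqVlt => /orP [/eqP <-|hpos].
  by rewrite !mul0r.
apply: ler_wpM2l; first exact: ltW.
apply: (@le_trans _ _ (\sum_phi pY eta phi * (a + 2 * Lam * \sum_(i : 'I_T) sc q (phi i)))).
  apply: ler_sum => phi _; apply: ler_wpM2l; first exact: (hY eta).1.
  apply: le_trans (Hn_frame phi q) _; apply: eqW; rewrite /a /Ssm; ring.
have -> : \sum_phi pY eta phi * (a + 2 * Lam * \sum_(i : 'I_T) sc q (phi i)) =
   a + 2 * Lam * \sum_phi pY eta phi * \sum_(i : 'I_T) sc q (phi i).
  rewrite -[in RHS](mul1r a) -(hY eta).2 mulr_suml mulr_sumr -big_split /=.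
  by apply: eq_bigr => phi _; ring.
rewrite fstat_sum /Z -/a.
have hso : sorts (sc q) eta := (hL (scaled gamma q)).2 eta hpos.
have := sorted_bound hso; rewrite -/(Ssm q) -/Smu => H.
have hL0 := Lam_ge0.
have hT0 : (0 : R) <= T%:R by [].
have : 0 <= 2 * Lam * T%:R by rewrite !mulr_ge0.
move=> h2; have := ler_wpM2l h2 H.
move=> H2; apply: le_trans (lerD (lexx a) H2); apply: eqW; ring.
Qed.


Hypotheses (hn : (0 < n)%N) (hlam : Lam < Smu).

Lemma Smu_gt0 : 0 < Smu.
Proof.
rewrite /Smu (bigD1 (Ordinal hn)) //=; apply: ltr_wpDr; last exact: hmu.
by apply: sumr_ge0 => l _; apply: ltW.
Qed.

Lemma Ssm_ge q l : sc q l * mu pS l <= Ssm q.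
Proof.
rewrite /Ssm (bigD1 l) //= lerDl; apply: sumr_ge0 => k _.
apply: mulr_ge0; [exact: sc_ge0 | exact: ltW].
Qed.

Lemma frame_good : exists N : nat, forall (q : {ffun 'I_n -> nat}) (l : 'I_n), (N < q l)%N ->
  \sum_eta \sum_phi pL (scaled gamma q) eta * pY eta phi * Hn T phi 0 q <= V q - T%:R.
Proof.
set delta := 1 - Lam / Smu.
have hSm := Smu_gt0.
have hd : 0 < delta by rewrite /delta subr_gt0 ltr_pdivrMr // mul1r.
have hT0 : (0 : R) < T%:R by rewrite ltr0n.
set rho := fun l => 2 * T%:R * delta * (mu pS l / gamma l).
have hrho : forall l, 0 < rho l.
  move=> l; rewrite /rho; apply: mulr_gt0; first by rewrite !mulr_gt0.
  by apply: divr_gt0.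
have hcT : 0 <= cT.
  rewrite /cT; apply: addr_ge0; [apply: mulr_ge0 => //; exact: B0_ge0|].  apply: mulr_ge0; [apply: mulr_ge0 => //; exact: exprn_ge0 | exact: B1_ge0].
set K := \sum_l (cT + T%:R) / rho l.
have hK : forall l, (cT + T%:R) / rho l <= K.
  move=> l; rewrite /K (bigD1 l) //= lerDl; apply: sumr_ge0 => k _.
  apply: divr_ge0; [by apply: addr_ge0 | exact: ltW].
have hK0 : 0 <= K by apply: le_trans (hK (Ordinal hn)); apply: divr_ge0; [by apply: addr_ge0 | exact: ltW].
exists (Num.Def.archi_bound K) => q l hq.
apply: le_trans (frame_avg q) _.
have hql : (cT + T%:R) / rho l <= (q l)%:R.
  apply: le_trans (hK l) _; apply: ltW; apply: lt_le_trans (archi_boundP hK0) _.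
  by rewrite ler_nat ltnW.
have h1 : cT + T%:R <= (q l)%:R * rho l.
  by rewrite -ler_pdivrMr.
have h2 : (q l)%:R * rho l = 2 * T%:R * delta * (sc q l * mu pS l).
  by rewrite /rho /sc /scaled; field; apply/negP => /eqP h; have := hg l; rewrite h ltxx.
have h3 := Ssm_ge q l.
have h4 : 2 * T%:R * delta * (sc q l * mu pS l) <= 2 * T%:R * delta * Ssm q.
  by apply: ler_wpM2l => //; rewrite ltW // !mulr_gt0.
have e : 2 * Lam * T%:R * (Ssm q / Smu) = 2 * T%:R * Ssm q - 2 * T%:R * delta * Ssm q.
  by rewrite /delta; field; apply/negP => /eqP h; move: hSm; rewrite h ltxx.
rewrite e; lra.
Qed.

Definition W (x : state n T) : R :=
  let: (q, phi, r) := x in Hn (T - r) phi r q + (T%:R - 1 - (r : nat)%:R).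

Lemma Hn_ge0 k : forall phi j q, 0 <= Hn k phi j q.
Proof.
elim: k => [|k IH] phi j q /=.
  apply: sumr_ge0 => l _; apply: divr_ge0; [apply: exprn_ge0; exact: ler0n | exact: ltW (hg l)].
apply: sumr_ge0 => a _; apply: sumr_ge0 => s _; apply: mulr_ge0 => //.
apply: mulr_ge0; [exact: hA.1 | exact: hS.1].
Qed.

Lemma W_ge0 x : 0 <= W x.
Proof.
case: x => [[q phi] r] /=; apply: addr_ge0; first exact: Hn_ge0.
have : ((r : nat) + 1 <= T)%N by rewrite addn1.
rewrite -(ler_nat R) natrD; lra.
Qed.


Lemma Ladd v (F : 'S_n -> dvec n T -> R) c :
  \sum_eta \sum_phi pL v eta * pY eta phi * (F eta phi + c) =
  \sum_eta \sum_phi pL v eta * pY eta phi * F eta phi + c.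
Proof.
have hc : \sum_eta \sum_phi pL v eta * pY eta phi * c = c.
  rewrite -[RHS]mul1r -(hL v).1.2 mulr_suml; apply: eq_bigr => eta _.
  rewrite -[RHS]mul1r -(hY eta).2 !mulr_suml; apply: eq_bigr => phi _; ring.
rewrite -[X in _ = _ + X]hc.
rewrite -big_split; apply: eq_bigr => eta _; rewrite -big_split.
by apply: eq_bigr => phi _ /=; ring.
Qed.

Lemma drift N
  (hN : forall (q : {ffun 'I_n -> nat}) (l : 'I_n), (N < q l)%N ->
     \sum_eta \sum_phi pL (scaled gamma q) eta * pY eta phi * Hn T phi 0 q <= V q - T%:R)
  (q : {ffun 'I_n -> nat}) (phi : dvec n T) (r : 'I_T) : (exists l, (N + Smax < q l)%N) ->
  Pstep pA pS gamma pL pY W (q, phi, r) <= W (q, phi, r) - 1.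
Proof.
move=> [l hl] /=.
case: insubP => [r' _ hr'|hn'].
  have hr : (r' : nat) = r.+1 := hr'.
  rewrite /= hr Eadd.
  have e : (T - r = (T - r.+1).+1)%N by have := ltn_ord r'; rewrite hr; lia.
  rewrite e /= idx_ord.
  rewrite -natr1; lra.
have hr : (r : nat).+1 = T by have := ltn_ord r; move: hn'; rewrite -leqNgt; lia.
have e : (T - r = 1)%N by lia.
rewrite e /= /ord0_of /= subn0.
have -> : (T%:R : R) - 1 - (r : nat)%:R = 0.
  have hrR : (((r : nat).+1)%:R : R) = T%:R by rewrite hr.
  rewrite -natr1 in hrR; lra.
rewrite addr0 idx_ord.
have H : forall (a : 'I_Amax.+1) (s : svec n Smax),
  \sum_eta \sum_phi' pL (scaled gamma (qupd q (phi r) (val a) s)) eta * pY eta phi' *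
     (Hn T phi' 0 (qupd q (phi r) (val a) s) + (T%:R - 1 - 0%:R)) <=
  V (qupd q (phi r) (val a) s) + - 1.
  move=> a s; rewrite Ladd.
  have := hN (qupd q (phi r) (val a) s) l.
  have h1 : (q l <= qupd q (phi r) (val a) s l + Smax)%N := qupd_ge q (phi r) a s l.
  move=> h2.
  have : (N < qupd q (phi r) (val a) s l)%N by lia.
  move=> /h2; lra.
apply: le_trans (Ele H) _.
by rewrite Eadd.
Qed.

End Lyap.

Unset Implicit Arguments.

Theorem corollary1 (R : realType) (n Smax : nat)
    (pS : svec n Smax -> R) (T : nat) (gamma : 'I_n -> R)
    (pL : ('I_n -> R) -> 'S_n -> R) (pY : 'S_n -> dvec n T -> R) :
  (0 < n)%N -> (0 < T)%N ->
  is_distr pS ->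
  (forall l, 0 < mu pS l) ->
  (forall i j : 'I_n, (i <= j)%N -> mu pS i <= mu pS j) ->
  (forall l, 0 < gamma l) ->
  valid_sorting pL ->
  (forall eta, is_distr (pY eta)) ->
  (forall (eta : 'S_n) (m : nat), (1 <= m <= n)%N ->
     \sum_(l : 'I_n | (l < m)%N) fstat pY l eta
       <= (\sum_(l : 'I_n | (l < m)%N) mu pS (eta l)) / (\sum_(l : 'I_n) mu pS l)) ->
  forall (Amax : nat) (pA : 'I_Amax.+1 -> R),
    is_distr pA ->
    arr_mean pA < \sum_(l : 'I_n) mu pS l ->
    positive_recurrent pA pS gamma pL pY.
Proof.
move=> hn hT hS hmu _ hg hL hY hf Amax pA hA hlam.
have [N hN] := @frame_good R n T Smax Amax pA pS gamma pL pY hA hS hg hmu hT hf hL hY hn hlam.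
pose M := (N + Smax)%N.
pose X := ({ffun 'I_n -> 'I_M.+1} * dvec n T * 'I_T)%type.
pose f := fun x : X => ((finfun (fun l : 'I_n => (val (x.1.1 l) : nat)) : {ffun 'I_n -> nat}), x.1.2, x.2) : state n T.
pose C := map f (enum (@predT X)).
exists C => x.
exists (1 + Pstep pA pS gamma pL pY (W pA pS gamma hT) x) => K.
apply: (@foster R n T Smax Amax pA pS gamma pL pY hA.1 hS.1
   (fun v eta => (hL v).1.1 eta) (fun eta => (hY eta).1)).
  exact: W_ge0.
move=> [[q phi] r] hx.
apply: (@drift R n T Smax Amax pA pS gamma pL pY hA hS hT hL hY hn hlam N hN).
case: (boolP [exists l, (M < q l)%N]) => [/existsP [l hl]|hno]; first by exists l.
exfalso; move/negP: hx; apply.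
apply/mapP.
have hq : forall l, (q l < M.+1)%N.
  move=> l; rewrite ltnS leqNgt; apply/negP => h; move/negP: hno; apply.
  by apply/existsP; exists l.
exists ((finfun (fun l : 'I_n => (inord (q l) : 'I_M.+1))), phi, r); first by rewrite mem_enum.
rewrite /f /=; congr (_, _, _); apply/ffunP => l; rewrite !ffunE /= inordK //.
Qed.
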